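(* Let $\Lambda$ be a row-finite $k$-graph with no sources and $R$ a commutative ring with $1$. Let $\mu,\nu\in\Lambda$ with $s(\mu)=s(\nu)$ and $r\in R\setminus\{0\}$ such that $r\,s_\mu s_{\nu^*}\in\mathcal{D}'$. Then $s_\mu s_{\mu^*}=s_\nu s_{\nu^*}$.
   Context: A $k$-graph is a countable category $\Lambda$ (vertices $\Lambda^0$, paths, maps $r,s$) with a degree functor $d:\Lambda\to\mathbb{N}^k$ satisfying unique factorization: if $d(\lambda)=m+n$ there are unique $\mu,\nu$ with $s(\mu)=r(\nu)$, $d(\mu)=m,d(\nu)=n$, $\lambda=\mu\nu$. $v\Lambda^n$ denotes paths of degree $n$ with range $v$; row-finite with no sources means each $v\Lambda^n$ is finite and nonempty. ${\rm KP}_R(\Lambda)$ is the universal $R$-algebra generated by $p_v$ ($v\in\Lambda^0$), $s_\lambda,s_{\lambda^*}$ ($d(\lambda)\ne0$) with relations (KP1) $p_v$ mutually orthogonal idempotents; (KP2) $s_\lambda s_\mu=s_{\lambda\mu}$, $s_{\mu^*}s_{\lambda^*}=s_{(\lambda\mu)^*}$, $p_{r(\lambda)}s_\lambda=s_\lambda=s_\lambda p_{s(\lambda)}$, $p_{s(\lambda)}s_{\lambda^*}=s_{\lambda^*}=s_{\lambda^*}p_{r(\lambda)}$ when $r(\mu)=s(\lambda)$; (KP3) $s_{\lambda^*}s_\mu=\delta_{\lambda,\mu}p_{s(\lambda)}$ when $d(\lambda)=d(\mu)$; (KP4) $p_v=\sum_{\lambda\in v\Lambda^n}s_\lambda s_{\lambda^*}$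 for $n\ne0$. Convention $s_v=s_{v^*}=p_v$. $\mathcal{D}$ is the $R$-subalgebra generated by $\{s_\mu s_{\mu^*}:\mu\in\Lambda\}$, and $\mathcal{D}'=\{a\in{\rm KP}_R(\Lambda): ad=da\ \forall d\in\mathcal{D}\}$. *)

(* Defs.v *)
From HB Require Import structures.
From mathcomp Require Import all_boot all_algebra.
Set Implicit Arguments. Unset Strict Implicit. Unset Printing Implicit Defensive.
Import GRing.Theory.
Local Open Scope ring_scope.

(* k-graphs.  A k-graph is a countable small category (objects = vertices, *)
(* morphisms = paths) with a degree functor d : Lambda -> N^k satisfying   *)
(* unique factorisation.  Degrees are functions 'I_k -> nat.  Composition  *)
(* is a total function [comp] which is only meaningful (and only           *)
(* constrained) on composable pairs (s(x) = r(y)); [comp x y] is x y.      *)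

Record kgraph (k : nat) := KGraph {
  vert : countType;
  kpath : countType;
  rg : kpath -> vert;
  sr : kpath -> vert;
  comp : kpath -> kpath -> kpath;
  idp : vert -> kpath;
  deg : kpath -> 'I_k -> nat;
  rg_idp : forall v, rg (idp v) = v;
  sr_idp : forall v, sr (idp v) = v;
  rg_comp : forall x y, sr x = rg y -> rg (comp x y) = rg x;
  sr_comp : forall x y, sr x = rg y -> sr (comp x y) = sr y;
  comp_idl : forall x, comp (idp (rg x)) x = x;
  comp_idr : forall x, comp x (idp (sr x)) = x;
  compA : forall x y z, sr x = rg y -> sr y = rg z ->
            comp x (comp y z) = comp (comp x y) z;
  deg_idp : forall v i, deg (idp v) i = 0%N;
  deg_comp : forall x y, sr x = rg y -> forall i, deg (comp x y) i = (deg x i + deg y i)%N;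
  factorisation : forall (l : kpath) (m n : 'I_k -> nat),
    (forall i, deg l i = (m i + n i)%N) ->
    exists mu nu, [/\ sr mu = rg nu, (forall i, deg mu i = m i),
                     (forall i, deg nu i = n i) & l = comp mu nu];
  factorisation_uniq : forall (m n : 'I_k -> nat) mu nu mu' nu',
    sr mu = rg nu -> sr mu' = rg nu' ->
    (forall i, deg mu i = m i) -> (forall i, deg nu i = n i) ->
    (forall i, deg mu' i = m i) -> (forall i, deg nu' i = n i) ->
    comp mu nu = comp mu' nu' -> mu = mu' /\ nu = nu'
}.

Arguments rg {k} _ _.
Arguments sr {k} _ _.
Arguments comp {k} _ _ _.
Arguments idp {k} _ _.
Arguments deg {k} _ _ _.

Definition enumerates {k} (L : kgraph k) (v : vert L) (n : 'I_k -> nat)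
    (s : seq (kpath L)) : Prop :=
  uniq s /\ forall l, l \in s <-> (rg L l = v /\ forall i, deg L l i = n i).

Definition row_finite_no_sources {k} (L : kgraph k) : Prop :=
  forall (v : vert L) (n : 'I_k -> nat),
    (exists s, enumerates v n s) /\
    (exists l, rg L l = v /\ forall i, deg L l i = n i).

(* Kumjian-Pask families.  We use the convention s_v = s_{v^*} = p_v,      *)
(* i.e. a family is given by p : vertices -> A and s, st : paths -> A      *)
(* (st l stands for s_{l^*}), with s l = st l = p (r l) on degree-0 paths  *)
(* (which are exactly the identities).                                     *)

Definition is_KP_family {k} (L : kgraph k) (R : comNzRingType) (A : algType R)
    (p : vert L -> A) (s st : kpath L -> A) : Prop :=
  (forall l, (forall i, deg L l i = 0%N) -> s l = p (rg L l) /\ st l = p (rg L l)) /\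
  (forall v, p v * p v = p v) /\
  (forall v w, v <> w -> p v * p w = 0) /\
  (forall l mu, rg L mu = sr L l ->
     s l * s mu = s (comp L l mu) /\ st mu * st l = st (comp L l mu)) /\
  (forall l, p (rg L l) * s l = s l /\ s l * p (sr L l) = s l /\
             p (sr L l) * st l = st l /\ st l * p (rg L l) = st l) /\
  (forall l mu, (forall i, deg L l i = deg L mu i) ->
     st l * s mu = if l == mu then p (sr L l) else 0) /\
  (forall v (n : 'I_k -> nat) (sq : seq (kpath L)), (exists i, n i <> 0%N) ->
     enumerates v n sq -> p v = \sum_(l <- sq) s l * st l).

Inductive gen_subalg (R : comNzRingType) (A : algType R) (G : A -> Prop) : A -> Prop :=
  | gs_gen x : G x -> gen_subalg G x
  | gs_zero : gen_subalg G 0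
  | gs_add x y : gen_subalg G x -> gen_subalg G y -> gen_subalg G (x + y)
  | gs_scale (c : R) x : gen_subalg G x -> gen_subalg G (c *: x)
  | gs_mul x y : gen_subalg G x -> gen_subalg G y -> gen_subalg G (x * y).

Definition KP_gens {k} (L : kgraph k) (R : comNzRingType) (A : algType R)
    (p : vert L -> A) (s st : kpath L -> A) (x : A) : Prop :=
  (exists v, x = p v) \/ (exists l, x = s l) \/ (exists l, x = st l).

Definition KP_universal {k} (L : kgraph k) (R : comNzRingType) (A : algType R)
    (p : vert L -> A) (s st : kpath L -> A) : Prop :=
  forall (B : algType R) (p' : vert L -> B) (s' st' : kpath L -> B),
    is_KP_family p' s' st' ->
    exists phi : A -> B,
      [/\ (forall x y, phi (x + y) = phi x + phi y),
          (forall (c : R) x, phi (c *: x) = c *: phi x),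
          (forall x y, phi (x * y) = phi x * phi y),
          (forall v, phi (p v) = p' v) &
          (forall l, phi (s l) = s' l /\ phi (st l) = st' l)].

(* KP_R(Lambda), realised as the non-unital subalgebra of A generated by a  *)
(* universal KP family (p, s, st) in A.                                    *)
Definition KP_alg {k} (L : kgraph k) (R : comNzRingType) (A : algType R)
    (p : vert L -> A) (s st : kpath L -> A) : A -> Prop :=
  gen_subalg (KP_gens p s st).

Definition KP_diag {k} (L : kgraph k) (R : comNzRingType) (A : algType R)
    (s st : kpath L -> A) : A -> Prop :=
  gen_subalg (fun x => exists mu, x = s mu * st mu).

Definition KP_diag_commutant {k} (L : kgraph k) (R : comNzRingType) (A : algType R)
    (p : vert L -> A) (s st : kpath L -> A) (a : A) : Prop :=
  KP_alg p s st a /\ forall d, KP_diag s st d -> a * d = d * a.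

(* Main.v *)
Require Import Defs.
From HB Require Import structures.
From mathcomp Require Import all_boot all_algebra.
From mathcomp Require boolp.
From Stdlib Require Import ClassicalEpsilon FunctionalExtensionality ProofIrrelevance.
Set Implicit Arguments. Unset Strict Implicit. Unset Printing Implicit Defensive.
Import GRing.Theory.
Section Paths.
Variable (k : nat) (L : kgraph k).
Local Notation P := (kpath L).
Local Notation dg := (deg L).

Definition dle (m n : 'I_k -> nat) := forall i, (m i <= n i)%N.
Definition dadd (m n : 'I_k -> nat) := fun i => (m i + n i)%N.
Definition dzero : 'I_k -> nat := fun _ => 0%N.

Definition facP (l : P) (m : 'I_k -> nat) (ab : P * P) : Prop :=
  [/\ sr L (ab.1) = rg L (ab.2), (forall i, dg (ab.1) i = m i),
      (forall i, dg (ab.2) i = dg l i - m i)%N & l = Defs.comp L (ab.1) (ab.2)].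

Definition fac (l : P) m : P * P := epsilon (inhabits (l, l)) (facP l m).
Definition pre l m := (fac l m).1.
Definition suf l m := (fac l m).2.

Lemma fac_spec l m : dle m (dg l) -> facP l m (fac l m).
Proof.
move=> hm; rewrite /fac; apply: epsilon_spec.
have [mu [nu [h1 h2 h3 h4]]] := @factorisation _ L l m (fun i => dg l i - m i)%N
  (fun i => esym (subnKC (hm i))).
by exists (mu, nu); split.
Qed.

Lemma deg_compE a b : sr L a = rg L b -> forall i, dg (Defs.comp L a b) i = (dg a i + dg b i)%N.
Proof. exact: deg_comp. Qed.

Lemma fac_uniq l m a b : sr L a = rg L b -> (forall i, dg a i = m i) ->
  l = Defs.comp L a b -> pre l m = a /\ suf l m = b.
Proof.
move=> hab ha hl.
have hdl : forall i, dg l i = (dg a i + dg b i)%N by move=> i; rewrite hl deg_compE.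
have hm : dle m (dg l) by move=> i; rewrite hdl -ha leq_addr.
have [h1 h2 h3 h4] := fac_spec hm.
have hb : forall i, dg b i = (dg l i - m i)%N by move=> i; rewrite hdl -ha addKn.
have := @factorisation_uniq _ L m (fun i => dg l i - m i)%N _ _ _ _ h1 hab h2 h3 ha hb.
by rewrite -h4 -hl; case.
Qed.

Lemma pre_spec l m : dle m (dg l) ->
  [/\ sr L (pre l m) = rg L (suf l m), (forall i, dg (pre l m) i = m i),
      (forall i, dg (suf l m) i = dg l i - m i)%N & l = Defs.comp L (pre l m) (suf l m)].
Proof. by move=> h; have := fac_spec h. Qed.

Lemma rg_pre l m : dle m (dg l) -> rg L (pre l m) = rg L l.
Proof. by move=> h; have [h1 _ _ h4] := pre_spec h; rewrite {2}h4 rg_comp. Qed.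

Lemma sr_suf l m : dle m (dg l) -> sr L (suf l m) = sr L l.
Proof. by move=> h; have [h1 _ _ h4] := pre_spec h; rewrite {2}h4 sr_comp. Qed.

Lemma deg0_idp l : (forall i, dg l i = 0%N) -> l = idp L (rg L l).
Proof.
move=> h.
have [] := @factorisation_uniq _ L dzero dzero (idp L (rg L l)) l l (idp L (sr L l)).
- by rewrite sr_idp.
- by rewrite rg_idp.
- by move=> i; rewrite deg_idp.
- exact: h.
- exact: h.
- by move=> i; rewrite deg_idp.
- by rewrite Defs.comp_idl Defs.comp_idr.
- by [].
Qed.

Lemma pre_full l : pre l (dg l) = l.
Proof. by have [] := @fac_uniq l (dg l) l (idp L (sr L l)); rewrite ?rg_idp ?Defs.comp_idr. Qed.

Lemma suf_zero l : suf l dzero = l.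
Proof.
have [] := @fac_uniq l dzero (idp L (rg L l)) l; rewrite ?sr_idp ?Defs.comp_idl //.
by move=> i; rewrite deg_idp.
Qed.

Lemma pre_pre l m n : dle m n -> dle n (dg l) -> pre (pre l n) m = pre l m.
Proof.
move=> hmn hn.
have [a1 a2 a3 a4] := pre_spec hn.
have hm' : dle m (dg (pre l n)) by move=> i; rewrite a2.
have [b1 b2 b3 b4] := pre_spec hm'.
have hs : sr L (suf (pre l n) m) = rg L (suf l n) by rewrite sr_suf // a1.
have e : l = Defs.comp L (pre (pre l n) m) (Defs.comp L (suf (pre l n) m) (suf l n)).
  by rewrite Defs.compA // -b4.
have [] := fac_uniq (m := m) _ b2 e => //.
by rewrite rg_comp.
Qed.

Lemma pre_comp a b m : sr L a = rg L b -> dle m (dg b) ->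
  pre (Defs.comp L a b) (dadd (dg a) m) = Defs.comp L a (pre b m) /\
  suf (Defs.comp L a b) (dadd (dg a) m) = suf b m.
Proof.
move=> hab hm.
have [a1 a2 a3 a4] := pre_spec hm.
have hr : sr L a = rg L (pre b m) by rewrite rg_pre.
have e : Defs.comp L a b = Defs.comp L (Defs.comp L a (pre b m)) (suf b m).
  by rewrite -Defs.compA // -a4.
have h1 : sr L (Defs.comp L a (pre b m)) = rg L (suf b m) by rewrite sr_comp.
have h2 : forall i, dg (Defs.comp L a (pre b m)) i = dadd (dg a) m i.
  by move=> i; rewrite deg_compE // a2.
by have [-> ->] := fac_uniq h1 h2 e.
Qed.

Lemma suf_suf l a b : dle (dadd a b) (dg l) ->
  suf (suf l a) b = suf l (dadd a b) /\
  pre l (dadd a b) = Defs.comp L (pre l a) (pre (suf l a) b).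
Proof.
move=> h.
have ha : dle a (dg l) by move=> i; apply: leq_trans (h i); rewrite leq_addr.
have [a1 a2 a3 a4] := pre_spec ha.
have hb : dle b (dg (suf l a)).
  by move=> i; rewrite a3 leq_subRL ?ha //; exact: h.
have [b1 b2 b3 b4] := pre_spec hb.
have hr : sr L (pre l a) = rg L (pre (suf l a) b) by rewrite rg_pre.
have e : l = Defs.comp L (Defs.comp L (pre l a) (pre (suf l a) b)) (suf (suf l a) b).
  by rewrite -Defs.compA // -b4.
have h1 : sr L (Defs.comp L (pre l a) (pre (suf l a) b)) = rg L (suf (suf l a) b).
  by rewrite sr_comp.
have h2 : forall i, dg (Defs.comp L (pre l a) (pre (suf l a) b)) i = dadd a b i.
  by move=> i; rewrite deg_compE // a2 b2.
by have [-> ->] := fac_uniq h1 h2 e.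
Qed.

Lemma pre_suf l m n : dle (dadd m n) (dg l) ->
  pre (suf l m) n = suf (pre l (dadd m n)) m.
Proof.
move=> h; have [_ e] := suf_suf h.
have ha : dle m (dg l) by move=> i; apply: leq_trans (h i); rewrite leq_addr.
have [a1 a2 a3 a4] := pre_spec ha.
have hb : dle n (dg (suf l m)).
  by move=> i; rewrite a3 leq_subRL ?ha //; exact: h.
have h1 : sr L (pre l m) = rg L (pre (suf l m) n) by rewrite rg_pre.
by have [_ ->] := fac_uniq h1 a2 e.
Qed.


Lemma dadd0l n : dadd dzero n = n. Proof. by apply: functional_extensionality. Qed.
Lemma dadd0r n : dadd n dzero = n.
Proof. by apply: functional_extensionality=> i; rewrite /dadd addn0. Qed.
Lemma daddA a b c : dadd a (dadd b c) = dadd (dadd a b) c.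
Proof. by apply: functional_extensionality=> i; rewrite /dadd addnA. Qed.
Lemma dle_refl n : dle n n. Proof. by []. Qed.
Lemma dle_addr a b : dle a (dadd a b). Proof. by move=> i; rewrite leq_addr. Qed.
Lemma dle_add2l a b c : dle b c -> dle (dadd a b) (dadd a c).
Proof. by move=> h i; rewrite leq_add2l. Qed.
Lemma dle0 n : dle dzero n. Proof. by []. Qed.
Lemma deg_eq l m : (forall i, dg l i = m i) -> dg l = m.
Proof. by move=> h; apply: functional_extensionality. Qed.

Record ipath := IPath {
  ipf :> ('I_k -> nat) -> P;
  ip_deg : forall n i, dg (ipf n) i = n i;
  ip_coh : forall m n, dle m n -> pre (ipf n) m = ipf m }.

Lemma ip_ext (x y : ipath) : (forall n, x n = y n) -> x = y.
Proof.
case: x => f1 d1 c1; case: y => f2 d2 c2 /= h.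
have e := functional_extensionality _ _ h; subst f2.
by rewrite (proof_irrelevance _ d1 d2) (proof_irrelevance _ c1 c2).
Qed.

Definition rgx (x : ipath) := rg L (x dzero).

Lemma dle_ip (x : ipath) m n : dle m n -> dle m (dg (x n)).
Proof. by move=> h i; rewrite ip_deg. Qed.

Lemma ip_rg (x : ipath) n : rg L (x n) = rgx x.
Proof. by rewrite /rgx -(ip_coh x (dle0 n)) rg_pre // dle_ip. Qed.

Lemma ip_zero (x : ipath) : x dzero = idp L (rgx x).
Proof. by apply: deg0_idp => i; rewrite ip_deg. Qed.

Definition shff m (x : ipath) n := suf (x (dadd m n)) m.

Lemma shff_deg m (x : ipath) n i : dg (shff m x n) i = n i.
Proof.
have [_ _ h _] := pre_spec (dle_ip x (dle_addr m n)).
by rewrite /shff h ip_deg /dadd addKn.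
Qed.

Lemma shff_coh m (x : ipath) a b : dle a b -> pre (shff m x b) a = shff m x a.
Proof.
move=> hab; rewrite /shff pre_suf; last by apply: dle_ip; exact: dle_add2l.
by rewrite ip_coh //; exact: dle_add2l.
Qed.

Definition shf m x := IPath (shff_deg m x) (shff_coh m x).

Definition catf l (x : ipath) n := pre (Defs.comp L l (x n)) n.

Lemma catf_deg l (x : ipath) : sr L l = rgx x -> forall n i, dg (catf l x n) i = n i.
Proof.
move=> h n i.
have hd : dle n (dg (Defs.comp L l (x n))).
  by move=> j; rewrite deg_compE ?ip_rg // ip_deg leq_addl.
by have [_ -> _ _] := pre_spec hd.
Qed.

Lemma catf_coh l (x : ipath) : sr L l = rgx x -> forall a b, dle a b ->
  pre (catf l x b) a = catf l x a.
Proof.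
move=> h a b hab; rewrite /catf.
have hs : sr L l = rg L (x b) by rewrite ip_rg.
have hd : dle a (dg (x b)) by exact: dle_ip.
have [e _] := pre_comp hs hd.
rewrite ip_coh // in e.
have hD : forall i, dg (Defs.comp L l (x b)) i = (dg l i + b i)%N.
  by move=> i; rewrite deg_compE // ip_deg.
rewrite -e (pre_pre hab); last by move=> i; rewrite hD leq_addl.
rewrite pre_pre //.
- by move=> i; rewrite leq_addl.
- by move=> i; rewrite hD leq_add2l.
Qed.

Definition cat l (x : ipath) : ipath :=
  match excluded_middle_informative (sr L l = rgx x) with
  | left h => IPath (catf_deg h) (catf_coh h)
  | right _ => x end.

Lemma cat_val l (x : ipath) : sr L l = rgx x -> forall n, cat l x n = catf l x n.
Proof. by move=> h n; rewrite /cat; case: excluded_middle_informative. Qed.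

Lemma shf0 (x : ipath) : shf dzero x = x.
Proof. by apply: ip_ext=> n /=; rewrite /shff dadd0l suf_zero. Qed.

Lemma ip_split (x : ipath) a b :
  sr L (x a) = rg L (shf a x b) /\ x (dadd a b) = Defs.comp L (x a) (shf a x b).
Proof.
have [h1 _ _ h4] := pre_spec (dle_ip x (dle_addr a b)).
rewrite (ip_coh x (dle_addr a b)) in h1 h4.
by split.
Qed.

Lemma rgx_shf m (x : ipath) : rgx (shf m x) = sr L (x m).
Proof.
have [h _] := ip_split x m dzero.
by rewrite h /rgx.
Qed.

Lemma shf_shf a b (x : ipath) : shf b (shf a x) = shf (dadd a b) x.
Proof.
apply: ip_ext=> n; rewrite /shf /= /shff /= daddA.
have hd : dle (dadd a b) (dg (x (dadd (dadd a b) n))).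
  by move=> i; rewrite ip_deg leq_addr.
by have [-> _] := suf_suf hd.
Qed.

Lemma rgx_cat l (x : ipath) : sr L l = rgx x -> rgx (cat l x) = rg L l.
Proof.
move=> h; rewrite /rgx cat_val // /catf rg_pre ?rg_comp ?ip_rg //.
Qed.

Lemma cat_deg l (x : ipath) : sr L l = rgx x -> cat l x (dg l) = l.
Proof.
move=> h; rewrite cat_val // /catf.
have hs : sr L l = rg L (x (dg l)) by rewrite ip_rg.
by have [-> _] := fac_uniq hs (fun i => erefl) (erefl _).
Qed.

Lemma shf_cat l (x : ipath) : sr L l = rgx x -> shf (dg l) (cat l x) = x.
Proof.
move=> h; apply: ip_ext=> n /=; rewrite /shff cat_val // /catf.
have hs : forall m, sr L l = rg L (x m) by move=> m; rewrite ip_rg.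
have [e _] := pre_comp (hs (dadd (dg l) n)) (@dle_ip x n (dadd (dg l) n) (fun i => leq_addl _ _)).
rewrite e ip_coh; last by move=> i; exact: leq_addl.
by have [_ ->] := fac_uniq (hs n) (fun i => erefl) (erefl _).
Qed.

Lemma cat_shf l (x : ipath) : x (dg l) = l -> cat l (shf (dg l) x) = x.
Proof.
move=> hx.
have hs : sr L l = rgx (shf (dg l) x) by rewrite rgx_shf hx.
apply: ip_ext=> n; rewrite cat_val // /catf.
have [_ e] := ip_split x (dg l) n.
by rewrite -{1}hx -e ip_coh // => i; exact: leq_addl.
Qed.

Lemma cat_cat l mu (x : ipath) : sr L l = rg L mu -> sr L mu = rgx x ->
  cat l (cat mu x) = cat (Defs.comp L l mu) x.
Proof.
move=> h1 h2.
have h3 : sr L l = rgx (cat mu x) by rewrite rgx_cat.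
have h4 : sr L (Defs.comp L l mu) = rgx x by rewrite sr_comp.
apply: ip_ext=> n; rewrite !cat_val // /catf cat_val // /catf.
have hs : sr L mu = rg L (x n) by rewrite ip_rg.
have hd : dle n (dg (Defs.comp L mu (x n))).
  by move=> i; rewrite deg_compE // ip_deg leq_addl.
have h1' : sr L l = rg L (Defs.comp L mu (x n)) by rewrite rg_comp.
have [e _] := pre_comp h1' hd.
rewrite -e pre_pre.
- by rewrite -Defs.compA.
- by move=> i; exact: leq_addl.
- by move=> i; rewrite deg_compE ?rg_comp // leq_add2l.
Qed.

Lemma cat_idp (x : ipath) : cat (idp L (rgx x)) x = x.
Proof.
have h : sr L (idp L (rgx x)) = rgx x by rewrite sr_idp.
apply: ip_ext=> n; rewrite cat_val // /catf -(ip_rg x n) Defs.comp_idl.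
by rewrite ip_coh.
Qed.


Section Exist.
Hypothesis HL : row_finite_no_sources L.
Definition one : 'I_k -> nat := fun _ => 1%N.
Definition ext (w : vert L) : P :=
  epsilon (inhabits (idp L w)) (fun l => rg L l = w /\ forall i, dg l i = one i).
Lemma ext_spec w : rg L (ext w) = w /\ forall i, dg (ext w) i = one i.
Proof. have [_ h] := HL w one. exact: (epsilon_spec (inhabits (idp L w)) _ h). Qed.

Variable v : vert L.
Fixpoint ch (j : nat) : P :=
  match j with 0 => idp L v | j.+1 => Defs.comp L (ch j) (ext (sr L (ch j))) end.
Definition cst (j : nat) : 'I_k -> nat := fun _ => j.

Lemma ch_deg j i : dg (ch j) i = j.
Proof.
elim: j => [|j IH] /=; first by rewrite deg_idp.
have [h1 h2] := ext_spec (sr L (ch j)).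
by rewrite deg_compE ?h1 // IH h2 addn1.
Qed.

Lemma ch_rg j : rg L (ch j) = v.
Proof.
elim: j => [|j IH] /=; first by rewrite rg_idp.
have [h1 h2] := ext_spec (sr L (ch j)).
by rewrite rg_comp ?h1.
Qed.

Lemma ch_pre j j' : (j <= j')%N -> pre (ch j') (cst j) = ch j.
Proof.
elim: j' => [|j' IH].
  rewrite leqn0 => /eqP ->.
  have -> : cst 0 = dg (ch 0) by apply: functional_extensionality=> i; rewrite ch_deg.
  by rewrite pre_full.
rewrite leq_eqVlt => /orP [/eqP ->|hj].
  have -> : cst j'.+1 = dg (ch j'.+1) by apply: functional_extensionality=> i; rewrite ch_deg.
  by rewrite pre_full.
have [h1 h2] := ext_spec (sr L (ch j')).
have e : pre (ch j'.+1) (cst j') = ch j'.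
  exact: (@fac_uniq (ch j'.+1) (cst j') (ch j') _ (esym h1) (ch_deg j') (erefl _)).1.
rewrite -(IH hj) -e pre_pre //.
- by move=> i; rewrite ch_deg.
Qed.

Definition NN (n : 'I_k -> nat) := (\max_i n i)%N.

Lemma ex_f_deg n i : dg (pre (ch (NN n)) n) i = n i.
Proof.
have hd : dle n (dg (ch (NN n))) by move=> j; rewrite ch_deg leq_bigmax.
by have [_ -> _ _] := pre_spec hd.
Qed.

Lemma ex_f_coh m n : dle m n -> pre (pre (ch (NN n)) n) m = pre (ch (NN m)) m.
Proof.
move=> hmn.
have hd : dle n (dg (ch (NN n))) by move=> j; rewrite ch_deg leq_bigmax.
have hN : (NN m <= NN n)%N.
  apply/bigmax_leqP=> i _; rewrite /NN; exact: leq_trans (hmn i) (leq_bigmax i).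
rewrite pre_pre // -(ch_pre hN) pre_pre //.
- by move=> i; rewrite leq_bigmax.
- by move=> i; rewrite ch_deg.
Qed.

Definition ip0 := IPath ex_f_deg ex_f_coh.

Lemma rgx_ip0 : rgx ip0 = v.
Proof. by rewrite /rgx /= rg_pre ?ch_rg // => i; rewrite ch_deg. Qed.
End Exist.

End Paths.
Section Ops.
Variable (k : nat) (L : kgraph k) (R : comNzRingType) (x0 : ipath L).
Local Notation F := (ipath L -> R).
Local Open Scope ring_scope.

Record op := Op {
  app :> F -> F;
  app_add : forall f g : F, app (fun y => f y + g y) = (fun y => app f y + app g y);
  app_scl : forall (a : R) (f : F), app (fun y => a * f y) = (fun y => a * app f y);
  app_tag : x0 = x0 }.

Lemma op_ext (T U : op) : (forall f y, T f y = U f y) -> T = U.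
Proof.
case: T => t1 a1 s1 g1; case: U => t2 a2 s2 g2 /= h.
have e : t1 = t2.
  by apply: functional_extensionality=> f; apply: functional_extensionality=> y.
subst t2.
by rewrite (proof_irrelevance _ a1 a2) (proof_irrelevance _ s1 s2) (proof_irrelevance _ g1 g2).
Qed.

HB.instance Definition _ := boolp.gen_eqMixin op.
HB.instance Definition _ := boolp.gen_choiceMixin op.

Program Definition op0 : op := @Op (fun f y => 0) _ _ _.
Next Obligation. by apply: functional_extensionality=> y; rewrite addr0. Qed.
Next Obligation. by apply: functional_extensionality=> y; rewrite mulr0. Qed.

Program Definition opadd (T U : op) : op := @Op (fun f y => T f y + U f y) _ _ _.
Next Obligation.
apply: functional_extensionality=> y; rewrite !app_add addrACA //.
Qed.
Next Obligation.
by apply: functional_extensionality=> y; rewrite !app_scl mulrDr.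
Qed.

Program Definition opopp (T : op) : op := @Op (fun f y => - T f y) _ _ _.
Next Obligation. by apply: functional_extensionality=> y; rewrite app_add opprD. Qed.
Next Obligation. by apply: functional_extensionality=> y; rewrite app_scl mulrN. Qed.

Program Definition op1 : op := @Op (fun f => f) _ _ _.

Program Definition opmul (T U : op) : op := @Op (fun f => T (U f)) _ _ _.
Next Obligation. by rewrite !app_add. Qed.
Next Obligation. by rewrite !app_scl. Qed.

Program Definition opscale (a : R) (T : op) : op := @Op (fun f y => a * T f y) _ _ _.
Next Obligation. by apply: functional_extensionality=> y; rewrite app_add mulrDr. Qed.
Next Obligation.
by apply: functional_extensionality=> y; rewrite app_scl mulrA (mulrC a) mulrA.
Qed.

Lemma opaddA : associative opadd.
Proof. by move=> *; apply: op_ext=> f y /=; rewrite addrA. Qed.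
Lemma opaddC : commutative opadd.
Proof. by move=> *; apply: op_ext=> f y /=; rewrite addrC. Qed.
Lemma opadd0 : left_id op0 opadd.
Proof. by move=> *; apply: op_ext=> f y /=; rewrite add0r. Qed.
Lemma opaddN : left_inverse op0 opopp opadd.
Proof. by move=> *; apply: op_ext=> f y /=; rewrite addNr. Qed.

HB.instance Definition _ := GRing.isZmodule.Build op opaddA opaddC opadd0 opaddN.

Lemma opmulA : associative opmul.
Proof. by move=> *; apply: op_ext. Qed.
Lemma opmul1 : left_id op1 opmul.
Proof. by move=> *; apply: op_ext. Qed.
Lemma opmul1r : right_id op1 opmul.
Proof. by move=> *; apply: op_ext. Qed.
Lemma opmulDl : left_distributive opmul (@GRing.add op).
Proof. by move=> *; apply: op_ext. Qed.
Lemma opmulDr : right_distributive opmul (@GRing.add op).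
Proof. by move=> T U V; apply: op_ext=> f y /=; rewrite app_add. Qed.
Lemma op1_neq0 : op1 != 0.
Proof.
apply/eqP=> h.
have := congr1 (fun T : op => T (fun _ => 1) x0) h => /= /eqP.
by rewrite oner_eq0.
Qed.

HB.instance Definition _ := GRing.Zmodule_isNzRing.Build op
  opmulA opmul1 opmul1r opmulDl opmulDr op1_neq0.

Lemma opscaleA a b (T : op) : opscale a (opscale b T) = opscale (a * b) T.
Proof. by apply: op_ext=> f y /=; rewrite mulrA. Qed.
Lemma opscale1 : left_id 1 opscale.
Proof. by move=> T; apply: op_ext=> f y /=; rewrite mul1r. Qed.
Lemma opscaleDr : right_distributive opscale (@GRing.add op).
Proof. by move=> a T U; apply: op_ext=> f y /=; rewrite mulrDr. Qed.
Lemma opscaleDl (T : op) : {morph opscale^~ T : a b / a + b}.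
Proof. by move=> a b; apply: op_ext=> f y /=; rewrite mulrDl. Qed.

HB.instance Definition _ := GRing.Zmodule_isLmodule.Build R op
  opscaleA opscale1 opscaleDr opscaleDl.

Lemma opscaleAl (a : R) (T U : op) : a *: (T * U) = (a *: T) * U.
Proof. by apply: op_ext. Qed.
HB.instance Definition _ := GRing.Lmodule_isLalgebra.Build R op opscaleAl.
Lemma opscaleAr (a : R) (T U : op) : a *: (T * U) = T * (a *: U).
Proof. by apply: op_ext=> f y /=; rewrite app_scl. Qed.
HB.instance Definition _ := GRing.Lalgebra_isAlgebra.Build R op opscaleAr.

End Ops.
Section Fam.
Variable (k : nat) (L : kgraph k) (R : comNzRingType) (x0 : ipath L).
Local Notation B := (@op k L R x0).
Local Notation dg := (deg L).
Local Open Scope ring_scope.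

Program Definition mkop (c : ipath L -> bool) (phi : ipath L -> ipath L) : B :=
  @Op k L R x0 (fun f y => if c y then f (phi y) else 0) _ _ _.
Next Obligation. by apply: functional_extensionality=> y; case: (c y); rewrite ?addr0. Qed.
Next Obligation. by apply: functional_extensionality=> y; case: (c y); rewrite ?mulr0. Qed.

Lemma mkop_mul (c1 c2 : ipath L -> bool) (p1 p2 : ipath L -> ipath L) :
  mkop c1 p1 * mkop c2 p2 = mkop (fun y => c1 y && c2 (p1 y)) (fun y => p2 (p1 y)).
Proof. by apply: op_ext=> f y /=; case: (c1 y). Qed.

Lemma mkop_ext (c c' : ipath L -> bool) (p p' : ipath L -> ipath L) : (forall y, c y = c' y) -> (forall y, c y -> p y = p' y) ->
  mkop c p = mkop c' p'.
Proof.
move=> h1 h2; apply: op_ext=> f y /=; rewrite -h1.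
by case: ifP => // /h2 ->.
Qed.

Lemma mkop_false (c : ipath L -> bool) (p : ipath L -> ipath L) : (forall y, c y = false) -> mkop c p = 0.
Proof. by move=> h; apply: op_ext=> f y /=; rewrite h. Qed.

Definition Pop v := mkop (fun y => rgx y == v) id.
Definition Sop l := mkop (fun y => y (dg l) == l) (shf (dg l)).
Definition Stop l := mkop (fun y => rgx y == sr L l) (cat l).

Lemma app_sum (s : seq (kpath L)) (T : kpath L -> B) f y :
  (\sum_(l <- s) T l) f y = \sum_(l <- s) T l f y.
Proof.
elim: s => [|a s IH]; first by rewrite !big_nil.
by rewrite !big_cons /= IH.
Qed.

Lemma sum_ifeq (s : seq (kpath L)) (a : kpath L) (c : R) : uniq s ->
  \sum_(l <- s) (if a == l then c else 0) = if a \in s then c else 0.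
Proof.
elim: s => [|b s IH]; first by rewrite big_nil.
rewrite big_cons in_cons /= => /andP [hb hu]; rewrite IH //.
case: eqP => [->|_] /=; last by rewrite add0r.
by rewrite (negbTE hb) addr0.
Qed.

Lemma idp_eq (a b : vert L) : (idp L a == idp L b) = (a == b).
Proof. by apply: inj_eq; apply: (can_inj (g := rg L)) => w; rewrite rg_idp. Qed.

Lemma is_fam : is_KP_family Pop Sop Stop.
Proof.
split.
  move=> l hl; have el := deg0_idp hl.
  have ed : dg l = @dzero k by apply: functional_extensionality.
  split.
    apply: mkop_ext=> y; first by rewrite ed ip_zero {1}el idp_eq.
    by rewrite ed shf0.
  apply: mkop_ext=> y; first by rewrite {1}el sr_idp.
  move=> /eqP h; rewrite el /=; rewrite el sr_idp in h; rewrite -h.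
  exact: cat_idp.
split.
  by move=> v; rewrite /Pop mkop_mul; apply: mkop_ext=> y //; rewrite andbb.
split.
  move=> v w hvw; rewrite /Pop mkop_mul; apply: mkop_false=> y /=.
  by case: eqP => // ->; apply/eqP=> h; exact: hvw.
split.
  move=> l mu hlm; split.
    rewrite /Sop mkop_mul; apply: mkop_ext.
      move=> y.
      have ed : dg (Defs.comp L l mu) = dadd (dg l) (dg mu).
        by apply: functional_extensionality=> i; rewrite deg_compE.
      rewrite ed; have [hs e] := ip_split y (dg l) (dg mu); rewrite e.
      apply/idP/eqP => [/andP [/eqP -> /eqP ->] //|h].
      have h1 : sr L l = rg L mu by [].
      have [a1 a2] := fac_uniq h1 (fun i => erefl) (erefl _).
      have [b1 b2] := fac_uniq hs (ip_deg y (dg l)) (erefl _).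
      rewrite h a1 a2 in b1 b2.
      by rewrite -b1 -b2 !eqxx.
    move=> y _ /=.
    have ed : dg (Defs.comp L l mu) = dadd (dg l) (dg mu).
      by apply: functional_extensionality=> i; rewrite deg_compE.
    by rewrite ed shf_shf.
  rewrite /Stop mkop_mul; apply: mkop_ext=> y.
    by rewrite sr_comp //; case: eqP => //= h; rewrite rgx_cat // hlm eqxx.
  by move=> /andP [/eqP h _]; rewrite cat_cat.
split.
  move=> l; split; [|split; [|split]].
  - rewrite /Pop /Sop mkop_mul; apply: mkop_ext=> y //=.
    case: (y (dg l) =P l) => [h|]; last by rewrite andbF.
    by rewrite -h ip_rg eqxx.
  - rewrite /Pop /Sop mkop_mul; apply: mkop_ext=> y //=.
    by case: eqP => //= h; rewrite rgx_shf h eqxx.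
  - rewrite /Pop /Stop mkop_mul; apply: mkop_ext=> y //=.
    by rewrite andbb.
  - rewrite /Pop /Stop mkop_mul; apply: mkop_ext=> y //=.
    by case: eqP => //= h; rewrite rgx_cat // eqxx.
split.
  move=> l mu hd.
  have ed : dg mu = dg l by apply: functional_extensionality=> i; rewrite hd.
  rewrite /Stop /Sop mkop_mul ed.
  case: eqP => [<-|hne].
    apply: mkop_ext=> y /=.
      by case: eqP => //= h; rewrite cat_deg // eqxx.
    by move=> /andP [/eqP h _]; rewrite shf_cat.
  apply: mkop_false=> y /=.
  by case: eqP => //= h; rewrite cat_deg //; apply/eqP.
move=> v n sq _ [hu hsq].
apply: op_ext=> f y; rewrite app_sum.
under eq_big_seq => l hl.
  have ed : dg l = n by apply: functional_extensionality=> i; have [_ ->] := (hsq l).1 hl.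
  rewrite /Sop /Stop mkop_mul /= ed.
  have -> : (y n == l) && (rgx (shf n y) == sr L l) = (y n == l).
    by case: eqP => //= <-; rewrite rgx_shf eqxx.
  have -> : (if y n == l then f (cat l (shf n y)) else 0) = (if y n == l then f y else 0).
    case: eqP => // h; have hx : y (dg l) = l by rewrite ed.
    by rewrite -ed (cat_shf hx).
  over.
rewrite sum_ifeq //= .
have -> : (y n \in sq) = (rgx y == v).
  apply/idP/eqP => [/hsq [<- _]|h]; first by rewrite ip_rg.
  by apply/hsq; split; [rewrite ip_rg|exact: ip_deg].
by [].
Qed.
End Fam.
Local Open Scope ring_scope.
Lemma torsion (k : nat) (L : kgraph k) (HL : row_finite_no_sources L)
    (R : comNzRingType) (A : algType R)
    (p : vert L -> A) (s st : kpath L -> A) (Huniv : KP_universal p s st)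
    (r : R) (Hr : r != 0) (v : vert L) : r *: p v <> 0.
Proof.
move=> h.
pose x0 := ip0 HL v.
have [phi [h1 h2 h3 h4 h5]] := Huniv _ _ _ _ (is_fam R x0).
have e0 : phi 0 = 0.
  by apply: (@addrI _ (phi 0)); rewrite -h1 !addr0.
have := congr1 phi h; rewrite e0 h2 h4 => /(congr1 (fun T : op R x0 => T (fun _ => 1) x0)) /=.
rewrite rgx_ip0 eqxx mulr1 => /eqP.
by rewrite (negbTE Hr).
Qed.

Lemma sum_ifeqA (V : nmodType) (T : eqType) (sq : seq T) (a : T) (c : V) : uniq sq ->
  \sum_(l <- sq) (if a == l then c else 0) = if a \in sq then c else 0.
Proof.
elim: sq => [|b sq IH]; first by rewrite big_nil.
rewrite big_cons in_cons /= => /andP [hb hu]; rewrite IH //.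
case: eqP => [->|_] /=; last by rewrite add0r.
by rewrite (negbTE hb) addr0.
Qed.

Section Main.
Variable (k : nat) (L : kgraph k) (HL : row_finite_no_sources L)
    (R : comNzRingType) (A : algType R)
    (p : vert L -> A) (s st : kpath L -> A)
    (HKP : is_KP_family p s st).
Local Notation dg := (deg L).

Lemma stS l : st l * s l = p (sr L l).
Proof.
have [_ [_ [_ [_ [_ [h _]]]]]] := HKP.
by rewrite h // eqxx.
Qed.

Lemma KPa l : p (rg L l) * s l = s l /\ s l * p (sr L l) = s l /\
             p (sr L l) * st l = st l /\ st l * p (rg L l) = st l.
Proof. by have [_ [_ [_ [_ [h _]]]]] := HKP. Qed.

Lemma KP2s l mu : rg L mu = sr L l -> s l * s mu = s (Defs.comp L l mu) /\
  st mu * st l = st (Defs.comp L l mu).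
Proof. by have [_ [_ [_ [h _]]]] := HKP; apply: h. Qed.

Lemma KP3s l mu : (forall i, dg l i = dg mu i) ->
     st l * s mu = if l == mu then p (sr L l) else 0.
Proof. by have [_ [_ [_ [_ [_ [h _]]]]]] := HKP; apply: h. Qed.

Lemma KP4g v n sq : enumerates v n sq -> p v = \sum_(l <- sq) s l * st l.
Proof.
have [hc [hp1 [_ [_ [_ [_ h4]]]]]] := HKP.
move=> hen.
case: (classic (exists i, n i <> 0%N)) => [hn|hn]; first exact: h4 hn hen.
have hn0 : forall i, n i = 0%N by move=> i; case: (n i =P 0%N) => // /(fun q => hn (ex_intro _ i q)).
have [hu hsq] := hen.
have hperm : perm_eq sq [:: idp L v].
  apply: uniq_perm => // l; rewrite inE.
  apply/idP/eqP => [/hsq [hr hd]|->].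
    by rewrite (deg0_idp (l := l)) ?hr // => i; rewrite hd hn0.
  by apply/hsq; rewrite rg_idp; split=> // i; rewrite deg_idp hn0.
rewrite (perm_big _ hperm) big_seq1.
have [-> ->] := hc (idp L v) (fun i => deg_idp _ _).
by rewrite rg_idp hp1.
Qed.

Lemma xsum mu n sq : enumerates (sr L mu) n sq ->
  s mu * st mu = \sum_(l <- map (Defs.comp L mu) sq) s l * st l.
Proof.
move=> hen; have [hu hsq] := hen.
have [_ [e1 _]] := KPa mu.
rewrite -{1}e1 (KP4g hen) big_map mulr_sumr mulr_suml.
apply: eq_big_seq => a ha.
have [hr _] := (hsq a).1 ha.
have [e2 e3] := KP2s hr.
by rewrite !mulrA e2 -mulrA e3.
Qed.

Lemma sandwich (T : seq (kpath L)) (N : 'I_k -> nat) l0 : uniq T ->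
  (forall l, l \in T -> forall i, dg l i = N i) -> (forall i, dg l0 i = N i) ->
  st l0 * (\sum_(l <- T) s l * st l) * s l0 = if l0 \in T then p (sr L l0) else 0.
Proof.
move=> hu hT h0.
rewrite mulr_sumr mulr_suml -(sum_ifeqA _ _ hu).
apply: eq_big_seq => l hl.
have hd : forall i, dg l0 i = dg l i by move=> i; rewrite h0 hT.
rewrite !mulrA KP3s //.
case: eqP => [<-|hne]; last by rewrite !mul0r.
by rewrite -mulrA stS; have [_ [hp1 _]] := HKP; rewrite hp1.
Qed.

End Main.
Theorem lemma4p8 (k : nat) (L : kgraph k) (HL : row_finite_no_sources L)
    (R : comNzRingType) (A : algType R)
    (p : vert L -> A) (s st : kpath L -> A)
    (HKP : is_KP_family p s st) (Huniv : KP_universal p s st)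
    (mu nu : kpath L) (Hsrc : sr L mu = sr L nu)
    (r : R) (Hr : r != 0)
    (HD : KP_diag_commutant p s st (r *: (s mu * st nu))) :
  s mu * st mu = s nu * st nu.
Proof.
have [_ hcomm] := HD.
have cx : r *: (s mu * st nu) * (s mu * st mu) = s mu * st mu * (r *: (s mu * st nu)).
  by apply: hcomm; apply: gs_gen; exists mu.
have cy : r *: (s mu * st nu) * (s nu * st nu) = s nu * st nu * (r *: (s mu * st nu)).
  by apply: hcomm; apply: gs_gen; exists nu.
have [_ [e1 _]] := KPa HKP mu.
have [_ [_ [e4 _]]] := KPa HKP nu.
have c1 : forall z, z * s mu * p (sr L mu) = z * s mu by move=> z; rewrite -mulrA e1.
have c2 : forall z, z * st nu * s nu = z * p (sr L nu) by move=> z; rewrite -mulrA (stS HKP).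
have c3 : forall z, z * st mu * s mu = z * p (sr L mu) by move=> z; rewrite -mulrA (stS HKP).
have c4 : forall z, z * p (sr L nu) * st nu = z * st nu by move=> z; rewrite -mulrA e4.
rewrite -!scalerAl -!scalerAr !mulrA in cx cy.
rewrite c3 e1 in cx; rewrite c2 c4 in cy.
(* cx : r *: (s mu * st nu * s mu * st mu) = r *: (s mu * st nu) *)
(* cy : r *: (s mu * st nu) = r *: (s nu * st nu * s mu * st nu) *)
have h1 : r *: (s nu * st nu * (s mu * st mu)) = r *: (s nu * st nu).
  have := congr1 (fun z => s nu * (st mu * z)) cx.
  rewrite -!scalerAr !mulrA c3 Hsrc c4.
  by [].
have h2 : r *: (s nu * st nu * (s mu * st mu)) = r *: (s mu * st mu).
  have := congr1 (fun z => z * s nu * st mu) cy.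
  rewrite -!scalerAl !mulrA !c2 -Hsrc e1 c1.
  by move=> ->.
have hxy : r *: (s mu * st mu) = r *: (s nu * st nu) by rewrite -h1 h2.
pose N := fun i => maxn (deg L mu i) (deg L nu i).
have [[sq1 hen1] _] := HL (sr L mu) (fun i => N i - deg L mu i)%N.
have [[sq2 hen2] _] := HL (sr L nu) (fun i => N i - deg L nu i)%N.
have hT : forall (m : kpath L) n sq, enumerates (sr L m) n sq ->
    (forall i, (deg L m i + n i)%N = N i) ->
    uniq (map (Defs.comp L m) sq) /\ forall l, l \in map (Defs.comp L m) sq -> forall i, deg L l i = N i.
  move=> m n sq [hu hsq] hN; split.
    rewrite map_inj_in_uniq // => a b ha hb e.
    have [ra _] := (hsq a).1 ha; have [rb _] := (hsq b).1 hb.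
    have [_ f1] := fac_uniq (esym ra) (fun i => erefl) (erefl _).
    have [_ f2] := fac_uniq (esym rb) (fun i => erefl) (erefl _).
    by rewrite -f1 -f2 e.
  move=> l /mapP [a ha ->] i.
  have [ra da] := (hsq a).1 ha.
  by rewrite deg_compE ?ra // da hN.
have [hu1 hd1] := hT _ _ _ hen1 (fun i => subnKC (leq_maxl _ _)).
have [hu2 hd2] := hT _ _ _ hen2 (fun i => subnKC (leq_maxr _ _)).
rewrite (xsum HKP hen1) (xsum HKP hen2) in hxy *.
have hsub : forall T T', uniq T -> uniq T' ->
    (forall l, l \in T -> forall i, deg L l i = N i) ->
    (forall l, l \in T' -> forall i, deg L l i = N i) ->
    r *: (\sum_(l <- T) s l * st l) = r *: (\sum_(l <- T') s l * st l) ->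
    forall l, l \in T -> l \in T'.
  move=> T T' hu hu' hd hd' e l hl.
  case h : (l \in T') => //.
  have := congr1 (fun z => st l * z * s l) e.
  rewrite -!scalerAr -!scalerAl (sandwich HKP hu hd (hd l hl)).
  rewrite (sandwich HKP hu' hd' (hd l hl)) hl h scaler0.
  by move/(torsion HL Huniv Hr).
have hperm : perm_eq (map (Defs.comp L mu) sq1) (map (Defs.comp L nu) sq2).
  apply: uniq_perm => // l; apply/idP/idP.
    exact: hsub hu1 hu2 hd1 hd2 hxy l.
  exact: hsub hu2 hu1 hd2 hd1 (esym hxy) l.
exact: perm_big.
Qed.
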